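(* Let $n\ge 4$ and $F=\{5,6,\dots,n\}$. Denote the partial conjugations of $W_n$ by $x_{i,D}$ and those of $W_4$ by $y_{i,D}$. The assignment $\varphi_{5^+}:\mathrm{Out}^0(W_n)\to\mathrm{Out}^0(W_4)$ given on generators by $\varphi_{5^+}(x_{i,D})=\mathrm{id}$ if $i\ge 5$ or $D\subseteq F$ or $D^c\subseteq F$, and $\varphi_{5^+}(x_{i,D})=y_{i,D\setminus F}$ otherwise, defines a surjective homomorphism, and the assignment $\psi_{5^+}(y_{i,D})=x_{i,D}$ defines a homomorphism $\psi_{5^+}:\mathrm{Out}^0(W_4)\to\mathrm{Out}^0(W_n)$ with $\varphi_{5^+}\circ\psi_{5^+}=\mathrm{id}$. In particular $\mathrm{Out}^0(W_n)\cong\ker\varphi_{5^+}\rtimes\mathrm{Out}^0(W_4)$ and $\psi_{5^+}$ embeds $\mathrm{Out}^0(W_4)$ as a subgroup of $\mathrm{Out}^0(W_n)$.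
   Context: $W_n=\langle a_1,\dots,a_n\mid a_i^2=1\rangle$, $[n]=\{1,\dots,n\}$. For $i\in[n]$ and nonempty $D\subseteq[n]\setminus\{i\}$, the partial conjugation $x_{i,D}$ sends $a_j\mapsto a_ia_ja_i$ for $j\in D$ and fixes the other generators; $D^c=[n]\setminus(D\cup\{i\})$. $\mathrm{Out}^0(W_n)=\mathrm{Aut}^0(W_n)/\mathrm{Inn}(W_n)$ where $\mathrm{Aut}^0(W_n)$ consists of automorphisms sending each $a_j$ to a conjugate of itself; in it $x_{i,D}=x_{i,D^c}$. Generators are taken as the $x_{i,D}$ with $D$ nonempty and not containing the minimal element $m$ of $[n]\setminus\{i\}$ (i.e. $D\subseteq[n]\setminus\{i,m\}$). With $\widetilde D=D\cup\{i\}$, $\widetilde{D^c}=D^c\cup\{i\}$, a presentation (Mühlherr) of $\mathrm{Out}^0(W_n)$ on these generators has relations: (R1) $x_{i,D}^2=1$; (R2) $x_{i,D}x_{i,D'}=x_{i,(D\cup D')\setminus(D\cap D')}$; (R3) $[x_{i,D_i},x_{j,D_j}]=1$ whenever $\widetilde{D_i}\cap\widetilde{D_j}=\emptyset$, $\widetilde{D_i^c}\cap\widetilde{D_j}=\emptyset$, or $\widetilde{D_i}\cap\widetilde{D_j^c}=\emptyset$. *)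

(* Defs.v *)
(* Out^0(W_n) is encoded through Muehlherr's presentation
   (given in the context) as a monoid presentation: words over the letters
   x_{i,D}, modulo the congruence generated by R1, R2, R3.  Since every
   generator is an involution (R1), this monoid is exactly the group
   presented.  Indices: the label k in [n] = {1..n} is the ordinal k-1 : 'I_n. *)
From mathcomp Require Import all_boot.
Set Implicit Arguments. Unset Strict Implicit. Unset Printing Implicit Defensive.

Definition letter (n : nat) := ('I_n * {set 'I_n})%type.

(* the (0-based) minimal element m of [n] \ {i} *)
Definition mnat (i : nat) : nat := if i == 0 then 1 else 0.

(* (i, D) is one of the chosen generators: D nonempty, D ⊆ [n] \ {i, m} *)
Definition valid n (g : letter n) : bool :=
  [&& g.2 != set0, g.1 \notin g.2 & [forall x in g.2, val x != mnat (val g.1)]].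

Definition validw n (w : seq (letter n)) : bool := all (@valid n) w.

Definition Dc n (i : 'I_n) (D : {set 'I_n}) : {set 'I_n} := ~: (i |: D).
Definition tilde n (i : 'I_n) (D : {set 'I_n}) : {set 'I_n} := i |: D.
Definition tildec n (i : 'I_n) (D : {set 'I_n}) : {set 'I_n} := i |: Dc i D.

Definition R3cond n (i : 'I_n) (Di : {set 'I_n}) (j : 'I_n) (Dj : {set 'I_n}) : bool :=
  [|| tilde i Di :&: tilde j Dj == set0,
      tildec i Di :&: tilde j Dj == set0 |
      tilde i Di :&: tildec j Dj == set0].

(* defining relations; [x,y] = 1 is written x y = y x (x, y involutions) *)
Inductive rel n : seq (letter n) -> seq (letter n) -> Prop :=
| rel_R1 (g : letter n) : valid g -> rel [:: g; g] [::]
| rel_R2 (i : 'I_n) (D D' : {set 'I_n}) :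
    valid (i, D) -> valid (i, D') -> D != D' ->
    rel [:: (i, D); (i, D')] [:: (i, (D :\: D') :|: (D' :\: D))]
| rel_R3 (i : 'I_n) (Di : {set 'I_n}) (j : 'I_n) (Dj : {set 'I_n}) :
    valid (i, Di) -> valid (j, Dj) -> R3cond i Di j Dj ->
    rel [:: (i, Di); (j, Dj)] [:: (j, Dj); (i, Di)].

Inductive eqv n : seq (letter n) -> seq (letter n) -> Prop :=
| eqv_refl w : eqv w w
| eqv_sym w1 w2 : eqv w1 w2 -> eqv w2 w1
| eqv_trans w1 w2 w3 : eqv w1 w2 -> eqv w2 w3 -> eqv w1 w3
| eqv_ctx u l r v : validw u -> validw v -> rel l r -> eqv (u ++ l ++ v) (u ++ r ++ v).

(* phi_{5+} on a letter of W_n; F = {5..n} = ordinals >= 4; the empty word is id *)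
Definition phi_letter n (g : letter n) : seq (letter 4) :=
  let: (i, D) := g in
  if [|| 4 <= val i, [forall x in D, 4 <= val x] | [forall x in Dc i D, 4 <= val x]]
  then [::]
  else [:: ((inord (val i) : 'I_4), [set (inord (val x) : 'I_4) | x in D & val x < 4])].

Definition phi n (w : seq (letter n)) : seq (letter 4) := flatten (map (@phi_letter n) w).

Definition psi_letter n (h : 4 <= n) (g : letter 4) : letter n :=
  (widen_ord h g.1, widen_ord h @: g.2).

Definition psi n (h : 4 <= n) (w : seq (letter 4)) : seq (letter n) :=
  map (psi_letter h) w.

(* Main.v *)
Require Import Defs.
From mathcomp Require Import all_boot.
From mathcomp Require Import zify.
Set Implicit Arguments. Unset Strict Implicit. Unset Printing Implicit Defensive.

Lemma eqv_rel n (l r : seq (letter n)) : Defs.rel l r -> eqv l r.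
Proof. by move=> H; have := @eqv_ctx n nil l r nil isT isT H; rewrite /= !cats0. Qed.

Lemma eqv_cat n (u v w1 w2 : seq (letter n)) : validw u -> validw v ->
  eqv w1 w2 -> eqv (u ++ w1 ++ v) (u ++ w2 ++ v).
Proof.
move=> Hu Hv; elim=> {w1 w2}.
- by move=> w; apply: eqv_refl.
- by move=> ? ? _; apply: eqv_sym.
- by move=> ? ? ? _ H1 _ H2; apply: eqv_trans H1 H2.
move=> u' l r v' Hu' Hv' Hr.
have := @eqv_ctx n (u ++ u') l r (v' ++ v).
rewrite /validw all_cat -/(validw u) -/(validw u') Hu Hu' all_cat -/(validw v) -/(validw v') Hv Hv'.
by rewrite -!catA => /(_ erefl erefl Hr).
Qed.

Lemma phi_cat n (a b : seq (letter n)) : phi (a ++ b) = phi a ++ phi b.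
Proof. by rewrite /phi map_cat flatten_cat. Qed.

Lemma psi_cat n (h : 4 <= n) (a b : seq (letter 4)) : psi h (a ++ b) = psi h a ++ psi h b.
Proof. by rewrite /psi map_cat. Qed.

Definition proj n (D : {set 'I_n}) : {set 'I_4} :=
  [set (inord (val x) : 'I_4) | x in D & val x < 4].

Lemma phi_letterE n (i : 'I_n) D : phi_letter (i, D) =
  if [|| 4 <= val i, [forall x in D, 4 <= val x] | [forall x in Dc i D, 4 <= val x]]
  then [::] else [:: ((inord (val i) : 'I_4), proj D)].
Proof. by []. Qed.

Lemma mem_proj n (h : 4 <= n) (D : {set 'I_n}) (y : 'I_4) :
  (y \in proj D) = (widen_ord h y \in D).
Proof.
apply/imsetP/idP.
  move=> [x]; rewrite inE => /andP[xD x4] ->.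
  suff -> : widen_ord h (inord x) = x by [].
  by apply: val_inj; rewrite /= inordK.
move=> yD; exists (widen_ord h y); first by rewrite inE yD /= ltn_ord.
by apply: val_inj; rewrite /= inordK.
Qed.

Lemma forall_proj n (h : 4 <= n) (D : {set 'I_n}) :
  [forall x in D, 4 <= val x] = (proj D == set0).
Proof.
apply/forall_inP/eqP.
  move=> H; apply/setP => y; rewrite mem_proj inE.
  by apply/negP => /H /=; rewrite leqNgt ltn_ord.
move=> H x xD; rewrite leqNgt; apply/negP => x4.
have := congr1 (fun S : {set 'I_4} => Ordinal x4 \in S) H.
rewrite mem_proj inE.
have -> : widen_ord h (Ordinal x4) = x by apply: val_inj.
by rewrite xD.

Qed.

Lemma mnat_lt i : mnat i < 2. Proof. by rewrite /mnat; case: (i == 0). Qed.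
Lemma mnat_neq i : mnat i != i. Proof. by rewrite /mnat; case: i. Qed.

Lemma forall_Dc n (i : 'I_n) D : valid (i, D) -> [forall x in Dc i D, 4 <= val x] = false.
Proof.
case/and3P=> /= D0 iD /forall_inP Hm.
case/set0Pn: D0 => x xD.
have mn : mnat i < n.
  apply: leq_trans (mnat_lt i) _.
  rewrite ltnNge; apply/negP => n1.
  have xi : x = i.
    apply: val_inj => /=; have := ltn_ord x; have := ltn_ord i; move: n1; clear; lia.
  by move: iD; rewrite -xi xD.
apply/negbTE/forall_inPn; exists (Ordinal mn).
  rewrite /Dc !inE negb_or; apply/andP; split.
    by apply/eqP => /(congr1 val) /= /eqP; rewrite (negbTE (mnat_neq _)).
  by apply/negP => /Hm /=; rewrite eqxx.
by rewrite /= -ltnNge; apply: leq_trans (mnat_lt _) _.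
Qed.

Lemma phi_letterV n (h : 4 <= n) (i : 'I_n) D : valid (i, D) ->
  phi_letter (i, D) = if (4 <= val i) || (proj D == set0) then [::]
                      else [:: ((inord (val i) : 'I_4), proj D)].
Proof. by move=> v; rewrite phi_letterE forall_Dc // orbF (forall_proj h). Qed.

Lemma proj_valid n (h : 4 <= n) (i : 'I_n) D : valid (i, D) -> val i < 4 ->
  proj D != set0 -> valid ((inord (val i) : 'I_4), proj D).
Proof.
case/and3P => /= _ iD /forall_inP Hm i4 P0; rewrite /valid /= P0 /=.
have wi : widen_ord h (inord (val i)) = i by apply: val_inj; rewrite /= inordK.
rewrite (mem_proj h) wi iD /=; apply/forall_inP => y; rewrite (mem_proj h) inordK //.
by move/Hm.
Qed.

Lemma validw_letter n (h : 4 <= n) (g : letter n) : valid g -> validw (phi_letter g).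
Proof.
case: g => i D v; rewrite (phi_letterV h) //; case: ifP => //= /negbT.
rewrite negb_or -ltnNge => /andP[i4 P0]; by rewrite /validw /= (proj_valid h).
Qed.

Lemma validw_phi n (h : 4 <= n) (w : seq (letter n)) : validw w -> validw (phi w).
Proof.
elim: w => //= g w IH /andP[vg vw].
rewrite /phi /= /validw all_cat.
rewrite -/(validw (phi_letter g)) (validw_letter h) //=; exact: IH.
Qed.

Lemma eq_wi n (h : 4 <= n) (i : 'I_n) (y : 'I_4) : val i < 4 ->
  (y == inord (val i)) = (widen_ord h y == i).
Proof. by move=> i4; rewrite -val_eqE /= inordK // -val_eqE. Qed.

Lemma inter0 n (h : 4 <= n) (A B : {set 'I_4}) (A' B' : {set 'I_n}) :
  (forall y, (y \in A) = (widen_ord h y \in A')) ->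
  (forall y, (y \in B) = (widen_ord h y \in B')) ->
  A' :&: B' == set0 -> A :&: B == set0.
Proof.
move=> HA HB /eqP H; apply/eqP/setP => y.
by rewrite in_setI HA HB -in_setI H !inE.
Qed.

Lemma R3_proj n (h : 4 <= n) (i : 'I_n) Di j Dj : val i < 4 -> val j < 4 ->
  R3cond i Di j Dj ->
  R3cond (inord (val i) : 'I_4) (proj Di) (inord (val j)) (proj Dj).
Proof.
move=> i4 j4.
have T : forall (k : 'I_n) D y, val k < 4 ->
    (y \in tilde (inord (val k) : 'I_4) (proj D)) = (widen_ord h y \in tilde k D).
  by move=> k D y k4; rewrite /tilde !inE (mem_proj h) (eq_wi h).
have Tc : forall (k : 'I_n) D y, val k < 4 ->
    (y \in tildec (inord (val k) : 'I_4) (proj D)) = (widen_ord h y \in tildec k D).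
  by move=> k D y k4; rewrite /tildec /Dc !inE (mem_proj h) (eq_wi h).
case/or3P => c; apply/or3P; [apply: Or31|apply: Or32|apply: Or33];
  apply: (@inter0 n h _ _ _ _ _ _ c) => y; by rewrite ?T ?Tc.
Qed.

Lemma phi2 n (a b : letter n) : phi [:: a; b] = phi_letter a ++ phi_letter b.
Proof. by rewrite /phi /= cats0. Qed.
Lemma phi1 n (a : letter n) : phi [:: a] = phi_letter a.
Proof. by rewrite /phi /= cats0. Qed.
Lemma phi0 n : phi ([::] : seq (letter n)) = [::].
Proof. by []. Qed.

Lemma symdiff0 (T : finType) (A B : {set T}) :
  (A :\: B :|: B :\: A == set0) = (A == B).
Proof.
apply/eqP/eqP => [H|->]; last by rewrite setDv setU0.
apply/setP => x; have := congr1 (fun S : {set T} => x \in S) H.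
by rewrite !inE; case: (x \in A); case: (x \in B).
Qed.

Lemma phi_rel n (h : 4 <= n) (l r : seq (letter n)) :
  Defs.rel l r -> eqv (phi l) (phi r).
Proof.
case => [g vg | i D D' vD vD' neq | i Di j Dj vi vj c].
- move: g vg => [i D] vg; rewrite ?phi2 ?phi1 ?phi0 !(phi_letterV h) //.
  case: ifP => /= [_|/negbT]; first exact: eqv_refl.
  rewrite negb_or -ltnNge => /andP[i4 P0].
  by apply: eqv_rel; apply: rel_R1; apply: (proj_valid h).
- have vDD : valid (i, D :\: D' :|: D' :\: D).
    move: vD vD' => /and3P[/= _ iD /forall_inP Hm] /and3P[/= _ iD' /forall_inP Hm'].
    rewrite /valid /= symdiff0 neq !inE (negbTE iD) (negbTE iD') /=.
    apply/forall_inP => x; rewrite !inE => /orP[/andP[_ xD]|/andP[_ xD]].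
      exact: Hm. exact: Hm'.
  rewrite ?phi2 ?phi1 ?phi0 !(phi_letterV h) //.
  case: (leqP 4 i) => i4 /=; first exact: eqv_refl.
  have -> : proj (D :\: D' :|: D' :\: D) = proj D :\: proj D' :|: proj D' :\: proj D.
    by apply/setP => y; rewrite !inE !(mem_proj h) !inE.
  case: (eqVneq (proj D) set0) => [->|P0]; case: (eqVneq (proj D') set0) => [->|P0'];
    rewrite /= ?set0D ?setD0 ?setU0 ?set0U ?eqxx /= ?(negbTE P0) ?(negbTE P0') /=;
    try exact: eqv_refl.
  case: (eqVneq (proj D) (proj D')) => [E|ne].
    rewrite E setDv setU0 eqxx; apply: eqv_rel; apply: rel_R1.
    exact: (proj_valid h).
  rewrite symdiff0 (negbTE ne); apply: eqv_rel; apply: rel_R2 => //;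
    exact: (proj_valid h).
- rewrite ?phi2 ?phi1 ?phi0 !(phi_letterV h) //.
  case: ifP => /= [_|/negbT]; first by rewrite !cats0; exact: eqv_refl.
  rewrite negb_or -ltnNge => /andP[i4 P0].
  case: ifP => /= [_|/negbT]; first exact: eqv_refl.
  rewrite negb_or -ltnNge => /andP[j4 P0'].
  apply: eqv_rel; apply: rel_R3; try exact: (proj_valid h).
  exact: (R3_proj h).
Qed.

Lemma phi_eqv n (h : 4 <= n) (w1 w2 : seq (letter n)) : eqv w1 w2 -> eqv (phi w1) (phi w2).
Proof.
elim=> {w1 w2}.
- by move=> w; apply: eqv_refl.
- by move=> ? ? _; apply: eqv_sym.
- by move=> ? ? ? _ H1 _ H2; apply: eqv_trans H1 H2.
move=> u l r v Hu Hv Hr; rewrite !phi_cat.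
by apply: eqv_cat; [exact: (validw_phi h) | exact: (validw_phi h) | exact: (phi_rel h)].
Qed.

Lemma mem_widen n (h : 4 <= n) (D : {set 'I_4}) y :
  (widen_ord h y \in widen_ord h @: D) = (y \in D).
Proof.
apply/imsetP/idP => [[z zD E]|yD]; last by exists y.
by have -> : y = z by apply: val_inj; move/(congr1 val): E.
Qed.

Lemma notin_widen n (h : 4 <= n) (D : {set 'I_4}) (x : 'I_n) :
  4 <= val x -> x \notin widen_ord h @: D.
Proof. by move=> x4; apply/imsetP => [[z _ E]]; move: x4; rewrite E /= leqNgt ltn_ord. Qed.

Lemma weq n (h : 4 <= n) (y z : 'I_4) : (widen_ord h y == widen_ord h z) = (y == z).
Proof. by apply/eqP/eqP => [E|->] //; apply: val_inj; exact: (congr1 val E). Qed.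
Lemma lt4 n (h : 4 <= n) (x : 'I_n) : val x < 4 -> exists y : 'I_4, x = widen_ord h y.
Proof. by move=> x4; exists (Ordinal x4); apply: val_inj. Qed.

Lemma psi_valid n (h : 4 <= n) (g : letter 4) : valid g -> valid (psi_letter h g).
Proof.
case: g => i D /and3P[/= D0 iD /forall_inP Hm].
rewrite /valid /psi_letter /= mem_widen iD /=; apply/andP; split.
  by case/set0Pn: D0 => y yD; apply/set0Pn; exists (widen_ord h y); rewrite mem_widen.
by apply/forall_inP => x /imsetP[y yD ->] /=; exact: Hm y yD.
Qed.

Lemma psi_rel n (h : 4 <= n) (l r : seq (letter 4)) :
  Defs.rel l r -> Defs.rel (psi h l) (psi h r).
Proof.
case => [g vg | i D D' vD vD' neq | i Di j Dj vi vj c].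
- by apply: rel_R1; apply: psi_valid.
- rewrite /psi /psi_letter /=.
  have -> : widen_ord h @: (D :\: D' :|: D' :\: D) =
     (widen_ord h @: D) :\: (widen_ord h @: D') :|: (widen_ord h @: D') :\: (widen_ord h @: D).
    apply/setP => x; case: (ltnP (val x) 4) => [/(lt4 h) [y ->]|x4].
      by rewrite !inE !mem_widen !inE.
    by rewrite !inE !(negbTE (notin_widen h _ x4)).
  apply: rel_R2; [exact: (psi_valid h vD) | exact: (psi_valid h vD') |].
  apply: contra neq => /eqP E; apply/eqP/setP => y.
  by rewrite -!(mem_widen h) E.
- apply: rel_R3; [exact: (psi_valid h vi) | exact: (psi_valid h vj) |].
  rewrite /psi_letter /=.
  have T : forall (k : 'I_4) (D : {set 'I_4}) y,
      (widen_ord h y \in tilde (widen_ord h k) (widen_ord h @: D)) = (y \in tilde k D).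
    by move=> k D y; rewrite /tilde !inE mem_widen weq.
  have Tc : forall (k : 'I_4) (D : {set 'I_4}) y,
      (widen_ord h y \in tildec (widen_ord h k) (widen_ord h @: D)) = (y \in tildec k D).
    by move=> k D y; rewrite /tildec /Dc !inE mem_widen weq.
  have N : forall (k : 'I_4) (D : {set 'I_4}) (x : 'I_n), 4 <= val x ->
      (x \in tilde (widen_ord h k) (widen_ord h @: D)) = false.
    move=> k D x x4; rewrite /tilde !inE (negbTE (notin_widen h _ x4)) orbF.
    by apply/eqP => E; move: x4; rewrite E /= leqNgt ltn_ord.
  case/or3P: c => c; apply/or3P; [apply: Or31|apply: Or32|apply: Or33];
    apply/eqP/setP => x; rewrite in_set0 in_setI;
    (case: (ltnP (val x) 4) => [/(lt4 h) [y ->]|x4];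
      [ rewrite ?T ?Tc -in_setI (eqP c) in_set0 // | by rewrite ?N ?andbF ]).
Qed.

Lemma psi_eqv n (h : 4 <= n) (v1 v2 : seq (letter 4)) :
  eqv v1 v2 -> eqv (psi h v1) (psi h v2).
Proof.
elim=> {v1 v2}.
- by move=> w; apply: eqv_refl.
- by move=> ? ? _; apply: eqv_sym.
- by move=> ? ? ? _ H1 _ H2; apply: eqv_trans H1 H2.
have vp : forall w, validw w -> validw (psi h w).
  by elim=> //= g w IH /andP[vg vw]; rewrite psi_valid // IH.
move=> u l r v Hu Hv Hr; rewrite !psi_cat.
by apply: eqv_cat; [exact: vp | exact: vp | apply: eqv_rel; exact: psi_rel].
Qed.

Lemma phi_psi n (h : 4 <= n) (v : seq (letter 4)) : validw v -> phi (psi h v) = v.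
Proof.
elim: v => //= g v IH /andP[vg vv].
have -> : phi (psi h (g :: v)) = phi_letter (psi_letter h g) ++ phi (psi h v) by [].
rewrite IH //; case: g vg => i D vg.
rewrite /psi_letter (phi_letterV h) ?(psi_valid h vg) //=.
have -> : proj (widen_ord h @: D) = D.
  by apply/setP => y; rewrite (mem_proj h) mem_widen.
rewrite leqNgt ltn_ord /=.
case/and3P: vg => /= D0 _ _; rewrite (negbTE D0) /=.
by congr ((_, _) :: _); apply: val_inj; rewrite /= inordK.
Qed.

Theorem mainTheorem5 (n : nat) (h : 4 <= n) :
  (* phi_{5+} sends generators to words in the generators of Out^0(W_4) *)
  (forall g : letter n, valid g -> validw (phi_letter g)) /\
  (* phi_{5+} is a well-defined homomorphism *)
  (forall w1 w2 : seq (letter n), validw w1 -> validw w2 ->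
     eqv w1 w2 -> eqv (phi w1) (phi w2)) /\
  (* phi_{5+} is surjective *)
  (forall v : seq (letter 4), validw v -> exists w : seq (letter n),
     validw w /\ eqv (phi w) v) /\
  (* psi_{5+} sends generators to generators *)
  (forall g : letter 4, valid g -> valid (psi_letter h g)) /\
  (* psi_{5+} is a well-defined homomorphism *)
  (forall v1 v2 : seq (letter 4), validw v1 -> validw v2 ->
     eqv v1 v2 -> eqv (psi h v1) (psi h v2)) /\
  (* phi_{5+} o psi_{5+} = id *)
  (forall v : seq (letter 4), validw v -> eqv (phi (psi h v)) v) /\
  (* psi_{5+} is injective (embeds Out^0(W_4)) *)
  (forall v1 v2 : seq (letter 4), validw v1 -> validw v2 ->
     eqv (psi h v1) (psi h v2) -> eqv v1 v2).
Proof.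
have vp : forall w, validw w -> validw (psi h w).
  by elim=> //= g w IH /andP[vg vw]; rewrite psi_valid // IH.
split; first exact: validw_letter.
split; first by move=> w1 w2 _ _; exact: phi_eqv.
split; first by move=> v vv; exists (psi h v); split; [exact: vp | rewrite phi_psi //; exact: eqv_refl].
split; first exact: psi_valid.
split; first by move=> v1 v2 _ _; exact: psi_eqv.
split; first by move=> v vv; rewrite phi_psi //; exact: eqv_refl.
move=> v1 v2 vv1 vv2 /(phi_eqv h).
by rewrite !phi_psi.
Qed.
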